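(* Let $m\ge 2$ and let $a_1,a_2,b_1,\dots,b_m,c_1,\dots,c_m\in\mathbb{C}$ satisfy $a_1\ne a_2$, $b_i\ne b_j$ and $c_i\ne c_j$ for $i\ne j$, and $a_1+(m-1)a_2=\sum_{i=1}^m(b_i+c_i)$. Define $m\times m$ complex matrices ${\bf B},{\bf C}$ by $$B_{ij}=\begin{cases}b_i+c_{m+1-i}-a_2 & i<j\\ b_i & i=j\\ 0 & i>j\end{cases},\qquad C_{ij}=\begin{cases}0 & i<j\\ c_{m+1-i} & i=j\\ b_i+c_{m+1-i}-a_2 & i>j\end{cases}.$$ Then ${\bf A}={\bf B}+{\bf C}$ is diagonalizable and its eigenvalues, with multiplicity, are $a_1$ (once) and $a_2$ (with multiplicity $m-1$).
   Context: All matrices act on $V=\mathbb{C}^m$ with its standard basis. *)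

(* Defs.v *)
(* Complex numbers are modelled as R[i] (mathcomp-real-closed
   `complex R`) over an arbitrary real number field R : realType, i.e. C. *)
From mathcomp Require Import all_boot all_algebra.
From mathcomp Require Import reals.
From mathcomp.real_closed Require Export complex.
Set Implicit Arguments. Unset Strict Implicit. Unset Printing Implicit Defensive.
Import GRing.Theory Num.Theory.
Local Open Scope ring_scope.

(* Indices 1..m of the paper are 0..m-1 here; the paper's index m+1-i
   corresponds to rev_ord i (value m-1-i). *)
Definition matB {F : ringType} (m : nat) (a2 : F) (b c : 'I_m -> F) : 'M[F]_m :=
  \matrix_(i, j) (if (i < j)%N then b i + c (rev_ord i) - a2
                  else if i == j then b i else 0).

Definition matC {F : ringType} (m : nat) (a2 : F) (b c : 'I_m -> F) : 'M[F]_m :=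
  \matrix_(i, j) (if (i < j)%N then 0
                  else if i == j then c (rev_ord i) else b i + c (rev_ord i) - a2).

(* Main.v *)
From mathcomp Require Import all_boot all_algebra.
Import GRing.Theory Num.Theory.
Local Open Scope ring_scope.
Set Warnings "-notation-overridden,-ambiguous-paths".

Lemma det_rank1 (R : idomainType) n (t : R) (u : 'cV[R]_n.+1) (v : 'rV[R]_n.+1) :
  t != 0 -> \det (t%:M - u *m v) = t ^+ n * (t - (v *m u) 0 0).
Proof.
move=> t0.
pose M := block_mx (t%:M : 'M_n.+1) u v (1%:M : 'M_1).
have E1 : M = block_mx 1%:M u 0 1%:M *m block_mx (t%:M - u *m v) 0 v 1%:M.
  rewrite mulmx_block !mul1mx !mul0mx ?mul1mx ?mul0mx ?mulmx1 ?mulmx0 ?add0r ?addr0.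
  by rewrite subrK.
have E2 : block_mx 1%:M 0 (- v) (t%:M : 'M_1) *m M =
          block_mx (t%:M : 'M_n.+1) u 0 (t%:M - v *m u).
  rewrite mulmx_block ?mul1mx ?mul0mx ?add0r ?addr0 ?mulNmx.
  by rewrite mul_mx_scalar mul_scalar_mx mulmx1 addNr addrC.
have D1 : \det M = \det (t%:M - u *m v).
  by rewrite E1 det_mulmx det_ublock det_lblock !det1 !mul1r mulr1.
have D2 : t * \det M = t ^+ n.+1 * (t - (v *m u) 0 0).
  have := congr1 determinant E2.
  rewrite det_mulmx det_lblock det_ublock det1 mul1r !det_scalar expr1 => ->.
  by rewrite det_mx11 !mxE eqxx mulr1n.
apply: (mulfI t0); rewrite -D1 D2 exprS mulrA.
done.
Qed.

Require Import Defs.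
From mathcomp Require Import reals.
From mathcomp.real_closed Require Import complex.

Theorem theorem2p2 (R : realType) (m : nat) (a1 a2 : R[i]) (b c : 'I_m -> R[i]) :
  (2 <= m)%N ->
  a1 != a2 ->
  injective b ->
  injective c ->
  a1 + (m - 1)%:R * a2 = \sum_(i < m) (b i + c i) ->
  let A := matB a2 b c + matC a2 b c in
  diagonalizable A /\
  char_poly A = ('X - a1%:P) * ('X - a2%:P) ^+ (m - 1).
Proof.
case: m b c => [|n] // b c _ a12 _ _ hsum A.
rewrite subSS subn0 in hsum *.
pose d i := b i + c (rev_ord i) - a2.
pose u : 'cV[R[i]]_n.+1 := \col_i d i.
pose v : 'rV[R[i]]_n.+1 := const_mx 1.
have EA : A = a2%:M + u *m v.
  apply/matrixP => i j; rewrite !mxE big_ord1 !mxE mulr1 /d.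
  case: ltnP => hij.
    have -> : (i == j) = false by apply/eqP => E; rewrite E ltnn in hij.
    by rewrite mulr0n add0r addr0.
  case: eqVneq => [->|hne]; first by rewrite mulr1n addrCA subrr addr0.
  by rewrite mulr0n !add0r.
have Evu : v *m u = (a1 - a2)%:M.
  apply/matrixP => i j; rewrite !ord1 !mxE.
  under eq_bigr do rewrite !mxE mul1r.
  rewrite /d big_split /= big_split /= sumrN.
  rewrite [X in _ + X - _](reindex_inj rev_ord_inj) /=.
  under [X in _ + X - _]eq_bigr do rewrite rev_ordK.
  rewrite -big_split /= -hsum sumr_const card_ord mulr1n mulr_natl mulrSr.
  by rewrite opprD addrA addrK.
pose N := u *m v.
have EN : N *m N = (a1 - a2) *: N.
  by rewrite /N mulmxA -(mulmxA u) Evu mul_mx_scalar scalemxAl.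
split.
  apply/diagonalizableP; exists [:: a1; a2]; first by rewrite /= inE a12.
  rewrite !big_cons big_nil mulr1; apply: mxminpoly_min.
  rewrite rmorphM !rmorphB /= horner_mx_X !horner_mx_C EA -/N.
  have -> : a2%:M + N - a2%:M = N by rewrite addrC addKr.
  have -> : a2%:M + N - a1%:M = N + (a2 - a1)%:M.
    by rewrite (raddfB (@scalar_mx _ n.+1)) addrAC addrC.
  rewrite -mulmxE mulmxDl EN mul_scalar_mx -scalerDl.
  have -> : a1 - a2 + (a2 - a1) = 0 by rewrite addrA subrK subrr.
  by rewrite scale0r.
rewrite /char_poly /char_poly_mx EA map_mxD map_mxM map_scalar_mx /=.
rewrite opprD addrA -(raddfB (@scalar_mx _ n.+1)) /=.
rewrite det_rank1 ?polyXsubC_eq0 // -map_mxM Evu map_scalar_mx mxE eqxx mulr1n.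
rewrite (rmorphB polyC) mulrC; congr (_ * _).
by rewrite opprB addrA subrK.
Qed.
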